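(* Let $m,k\in\mathbb{N}$ and let $\alpha\in\mathbb{C}$ with $\alpha,1-\alpha\notin\mathbb{Z}_0^-$. Then \[ {}_3F_2\left[\begin{array}{r} -m,\ \alpha,\ 1-\alpha;\\ -2m-k,\ 1+k;\end{array}1\right]_m=\frac{\left(\frac{2-\alpha+k}{2}\right)_{m} \left(\frac{1+\alpha+k}{2}\right)_{m}}{\left(\frac{2+k}{2}\right)_{m} \left(\frac{1+k}{2}\right)_{m}}. \]
   Context: $\mathbb{N}=\{1,2,3,\dots\}$, $\mathbb{Z}_0^-=\{0,-1,-2,\dots\}$. For $a\in\mathbb{C}$ and $n\in\mathbb{N}_0$, $(a)_0=1$ and $(a)_n=a(a+1)\cdots(a+n-1)$. For $N\in\mathbb{N}_0$, ${}_3F_2\left[\begin{array}{r} a_1,a_2,a_3;\\ b_1,b_2;\end{array}z\right]_N=\sum_{n=0}^{N}\frac{(a_1)_n(a_2)_n(a_3)_n}{(b_1)_n(b_2)_n}\frac{z^n}{n!}$ (the sum of the first $N+1$ terms), defined whenever $(b_1)_n(b_2)_n\neq0$ for $0\le n\le N$. *)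

(* Defs.v *)
From HB Require Import structures.
From mathcomp Require Import all_boot all_order all_algebra.
From mathcomp Require Import complex.
From mathcomp Require Import reals.
Set Implicit Arguments. Unset Strict Implicit. Unset Printing Implicit Defensive.
Import Order.TTheory GRing.Theory Num.Theory.
Local Open Scope ring_scope.

Definition poch {F : pzRingType} (a : F) (n : nat) : F :=
  \prod_(i < n) (a + i%:R).

(* Truncated 3F2: sum of the first N+1 terms. Division is field division;
   the theorem is only applied where the denominators are nonzero. *)
Definition F32_trunc {F : fieldType} (a1 a2 a3 b1 b2 z : F) (N : nat) : F :=
  \sum_(n < N.+1)
     (poch a1 n * poch a2 n * poch a3 n) / (poch b1 n * poch b2 n)
     * z ^+ n / (n`!)%:R.

Definition in_Z0minus {F : pzRingType} (x : F) : Prop :=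
  exists j : nat, x = - (j%:R).

(* Main.v *)
Require Import Defs.
From HB Require Import structures.
From mathcomp Require Import all_boot all_order all_algebra.
From mathcomp Require Import complex.
From mathcomp Require Import reals.
From mathcomp Require Import ring zify.
Import Order.TTheory GRing.Theory Num.Theory.
Local Open Scope ring_scope.

Section Gen.
Variable F : fieldType.
Hypothesis Hc : forall n : nat, (n.+1)%:R != 0 :> F.

Lemma nat_neq0 n : (0 < n)%N -> n%:R != 0 :> F.
Proof. by case: n => // n _; apply: Hc. Qed.

Lemma pochS (a : F) n : poch a n.+1 = poch a n * (a + n%:R).
Proof. by rewrite /poch big_ord_recr. Qed.

Lemma pochSl (a : F) n : poch a n.+1 = a * poch (a + 1) n.
Proof.
rewrite /poch big_ord_recl /= addr0; congr (_ * _); apply: eq_bigr => i _.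
by rewrite /bump /= add1n -natr1 -addrA [1 + _]addrC.
Qed.

Lemma poch0 (a : F) : poch a 0 = 1.
Proof. by rewrite /poch big_ord0. Qed.

Lemma poch_pos_neq0 c n : (0 < c)%N -> poch (c%:R : F) n != 0.
Proof.
move=> c0; apply/prodf_neq0 => i _; rewrite -natrD nat_neq0 //.
by rewrite addn_gt0 c0.
Qed.

Lemma poch_neg_neq0 N n : (n <= N)%N -> poch (- (N%:R) : F) n != 0.
Proof.
move=> nN; apply/prodf_neq0 => i _.
have iN : (i < N)%N by apply: leq_trans (ltn_ord i) nN.
rewrite addrC -opprB -natrB ?(ltnW iN) // oppr_eq0 nat_neq0 // subn_gt0 //.
Qed.

Lemma negnat a b : (b < a)%N -> - a%:R + b%:R != 0 :> F.
Proof.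
move=> ba; rewrite addrC -opprB -natrB ?(ltnW ba) // oppr_eq0 nat_neq0 //.
by rewrite subn_gt0.
Qed.

Variable k : nat.
Hypothesis k0 : (0 < k)%N.

Definition cc m n : F := poch (-(m%:R)) n /
  (poch (-((2 * m+k)%N%:R)) n * poch (1 + k%:R) n * (n`!)%:R).
Definition cc' m n : F := if n is n'.+1 then cc m n' else 0.
Definition AA m : F := ((k + 2 * m).+1 * (k+2 * m).+2)%:R.

Lemma rec_cc m n : (n <= m.+1)%N ->
  cc m.+1 n * AA m = cc' m n + (AA m - (n * n.+1)%:R) * cc m n.
Proof.
case: n => [_|n nm].
  by rewrite /cc /cc' !poch0 /= !mul1r invr1 mul1r mul0n subr0 add0r mulr1.
rewrite /cc' /cc (_ : 1 + k%:R = k.+1%:R :> F); last by rewrite addrC natr1.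
rewrite (pochSl (-(m.+1%:R))) (_ : -(m.+1%:R) + 1 = - (m%:R) :> F); last first.
  by rewrite -natr1; ring.
rewrite (pochSl (-((2 * m.+1+k)%N%:R))).
rewrite (_ : -((2 * m.+1+k)%N%:R) + 1 = - ((2 * m+k).+1%:R) :> F); last first.
  by rewrite !natrD !natrM -!natr1; ring.
have Hq : poch (-((2 * m+k)%N%:R)) n = poch (- ((2 * m+k).+1%:R)) n * (- ((2 * m+k).+1%:R) + n%:R) / (- ((2 * m+k).+1%:R)) :> F.
  have e : -((2 * m + k)%N%:R) = - ((2 * m + k).+1%:R) + 1 :> F by rewrite -natr1; ring.
  rewrite e -pochS pochSl mulrC mulrA mulVf ?mul1r //.
  by rewrite oppr_eq0 Hc.
rewrite (pochS (-(m%:R))) (pochS (-((2 * m+k)%N%:R))) (pochS (k.+1%:R)) Hq.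
rewrite factS natrM.
have := poch_neg_neq0 (2 * m+k).+1 n.
have := poch_pos_neq0 k.+1 n.
have := Hc n`!.-1; rewrite prednK ?fact_gt0 //.
move: (poch (-((2 * m+k).+1%:R)) n) (poch (- m%:R) n) (poch (k.+1%:R) n) (n`!%:R) => q p r f.
move=> f0 /(_ isT) r0 q0.
have /q0 {}q0 : (n <= (2 * m + k).+1)%N by lia.
rewrite /AA.
field.
rewrite -!natrM -!natrD !nat1r -?natrM -?natrD.
rewrite f0 r0 q0 !oppr_eq0 !Hc !negnat; try lia.
Qed.


Definition PP (x : F) n := \prod_(i < n) (x + (i * i.+1)%:R).

Lemma PPS x n : PP x n.+1 = PP x n * (x + (n * n.+1)%:R).
Proof. by rewrite /PP big_ord_recr. Qed.

Lemma cc_last m : cc m m.+1 = 0.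
Proof. by rewrite /cc pochS addNr mulr0 mul0r. Qed.

Lemma AA_neq0 m : AA m != 0.
Proof. by rewrite /AA nat_neq0. Qed.

Lemma main_sum x m : \sum_(n < m.+1) cc m n * PP x n
   = \prod_(j < m) ((x + AA j) / AA j).
Proof.
elim: m => [|m IH].
  by rewrite big_ord1 big_ord0 /cc /PP !poch0 big_ord0 !mul1r invr1 mulr1.
rewrite [RHS]big_ord_recr /= -IH.
have Anz := AA_neq0 m.
have key : (\sum_(n < m.+2) cc m.+1 n * PP x n) * AA m
   = (\sum_(n < m.+1) cc m n * PP x n) * (x + AA m).
  rewrite mulr_suml.
  transitivity (\sum_(n < m.+2) (cc' m n + (AA m - (n * n.+1)%:R) * cc m n) * PP x n).
    by apply: eq_bigr => i _; rewrite mulrAC rec_cc // -ltnS.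
  under eq_bigr do rewrite mulrDl.
  rewrite big_split /= big_ord_recl /= mul0r add0r.
  rewrite [X in _ + X]big_ord_recr /= cc_last mulr0 mul0r addr0.
  rewrite mulr_suml -big_split /=; apply: eq_bigr => i _.
  rewrite /bump /= add0n add1n PPS; ring.
apply: (mulIf Anz); rewrite key.
by rewrite mulrA divfK.
Qed.


Lemma poch_pair (a : F) n : poch a n * poch (1 - a) n = PP (a * (1 - a)) n.
Proof.
elim: n => [|n IH]; first by rewrite !poch0 /PP big_ord0 mulr1.
rewrite !pochS PPS -IH natrM -!natr1; ring.
Qed.

Lemma lhs_eq (a : F) m :
  F32_trunc (- (m%:R)) a (1 - a) (- (2 * m + k)%N%:R) (1 + k%:R) 1 m
  = \sum_(n < m.+1) cc m n * PP (a * (1 - a)) n.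
Proof.
apply: eq_bigr => n _; rewrite -poch_pair expr1n mulr1 /cc !invfM; ring.
Qed.

Lemma two_neq0 : (2 : F) != 0.
Proof. exact: (Hc 1). Qed.

Lemma factor_eq (a : F) j :
  ((2 - a + k%:R) / 2 + j%:R) * ((1 + a + k%:R) / 2 + j%:R)
  = (((2 + k%:R) / 2 + j%:R) * ((1 + k%:R) / 2 + j%:R)) * ((a * (1 - a) + AA j) / AA j).
Proof.
have := AA_neq0 j; have := two_neq0.
rewrite /AA natrM -!natr1 ?natrD ?natrM => t0 A0.
field.
move: A0; rewrite addr0 mulf_eq0 negb_or => /andP[h1 h2].
by rewrite h1 h2 two_neq0.
Qed.


Lemma rhs_prod (a : F) m :
  poch ((2 - a + k%:R)/2) m * poch ((1 + a + k%:R)/2) m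
  = (poch ((2 + k%:R)/2) m * poch ((1 + k%:R)/2) m)
    * \prod_(j < m) ((a * (1 - a) + AA j) / AA j).
Proof.
rewrite /poch -!big_split /=; apply: eq_bigr => j _; exact: factor_eq.
Qed.

Lemma half_neq0 c i : (0 < c)%N -> (c%:R + k%:R) / 2 + i%:R != 0 :> F.
Proof.
move=> c0.
rewrite (_ : (c%:R + k%:R) / 2 + i%:R = (c + k + 2 * i)%:R / 2).
  rewrite mulf_neq0 ?invr_neq0 ?two_neq0 // nat_neq0 //; lia.
rewrite !(natrD, natrM); field; exact: two_neq0.
Qed.

Lemma den_neq0 m : poch ((2 + k%:R)/2 : F) m * poch ((1 + k%:R)/2) m != 0.
Proof.
apply: mulf_neq0; apply/prodf_neq0 => i _.
  exact: (half_neq0 2).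
exact: (half_neq0 1).
Qed.

End Gen.

Local Open Scope complex_scope.

Theorem mainTheorem5 (R : realType) (m k : nat) (alpha : R[i]) :
  (0 < m)%N -> (0 < k)%N ->
  ~ in_Z0minus alpha -> ~ in_Z0minus (1 - alpha) ->
  F32_trunc (- (m%:R)) alpha (1 - alpha)
            (- (2 * m + k)%N%:R) (1 + k%:R) 1 m
  = (poch ((2 - alpha + k%:R) / 2) m * poch ((1 + alpha + k%:R) / 2) m)
    / (poch ((2 + k%:R) / 2) m * poch ((1 + k%:R) / 2) m).
Proof.
move=> _ k0 _ _.
have Hc : forall n : nat, n.+1%:R != 0 :> R[i] by move=> n; rewrite pnatr_eq0.
rewrite lhs_eq (main_sum _ Hc _ k0) (rhs_prod _ Hc) mulrAC divff ?mul1r //.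
exact: (den_neq0 _ Hc _ k0).
Qed.
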